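(* Let $R$ be an artinian ring and $\mathcal{S}$ a full subcategory of $\operatorname{Mod}R$ which is closed under direct sums and submodules and contains $R_R$, such that $\mathcal{S}$ has only finitely many indecomposable finitely generated objects up to isomorphism, say $M_1,\dots,M_n$. Let $M=M_1\oplus\cdots\oplus M_n$, $E=\operatorname{End}(M_R)$ (so $M$ is an $E$-$R$-bimodule), and $X\in\mathcal{S}$. Then the evaluation map $\lambda:\operatorname{Hom}_R(M,X)\otimes_E M\to X$, $\varphi\otimes m\mapsto\varphi(m)$, is an isomorphism of right $R$-modules.
   Context: $\operatorname{Hom}_R(M,X)$ is a right $E$-module via $(\varphi\cdot s)(m)=\varphi(s(m))$. *)

(* Defs.v *)
(* Right R-modules are modelled as left R^c-modules
   (lmodType R^c), where R^c is the converse ring of R: a *: v means v·a. *)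
From HB Require Import structures.
From mathcomp Require Import all_boot all_order all_algebra.
From Stdlib Require Lists.List.

Set Implicit Arguments.
Unset Strict Implicit.
Unset Printing Implicit Defensive.

Import GRing.Theory.
Local Open Scope ring_scope.

Definition is_right_ideal (R : nzRingType) (I : R -> Prop) : Prop :=
  [/\ I 0, (forall x y, I x -> I y -> I (x - y)) & (forall x r, I x -> I (x * r))].

Definition is_left_ideal (R : nzRingType) (I : R -> Prop) : Prop :=
  [/\ I 0, (forall x y, I x -> I y -> I (x - y)) & (forall x r, I x -> I (r * x))].

Definition right_artinian (R : nzRingType) : Prop :=
  forall I : nat -> R -> Prop, (forall n, is_right_ideal (I n)) ->
    (forall n x, I n.+1 x -> I n x) ->
    exists N, forall n, (N <= n)%N -> forall x, I N x -> I n x.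

Definition left_artinian (R : nzRingType) : Prop :=
  forall I : nat -> R -> Prop, (forall n, is_left_ideal (I n)) ->
    (forall n x, I n.+1 x -> I n x) ->
    exists N, forall n, (N <= n)%N -> forall x, I N x -> I n x.

Definition artinian (R : nzRingType) : Prop := right_artinian R /\ left_artinian R.

Notation rmodType R := (lmodType R^c).

Notation regular_rmod R := ((R^c)^o : lmodType R^c).

Definition is_hom (R : nzRingType) (U V : rmodType R) (f : U -> V) : Prop :=
  (forall u v, f (u + v) = f u + f v) /\ (forall (a : R^c) u, f (a *: u) = a *: f u).

Definition isomorphic (R : nzRingType) (U V : rmodType R) : Prop :=
  exists f : U -> V, is_hom f /\ bijective f.

Definition submodule (R : nzRingType) (U : rmodType R) (A : U -> Prop) : Prop :=
  [/\ A 0, (forall u v, A u -> A v -> A (u + v)), (forall u, A u -> A (- u))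
    & (forall (a : R^c) u, A u -> A (a *: u))].

Definition indecomposable (R : nzRingType) (U : rmodType R) : Prop :=
  (exists u : U, u <> 0) /\
  forall A B : U -> Prop, submodule A -> submodule B ->
    (forall u, exists a b, [/\ A a, B b & u = a + b]) ->
    (forall u, A u -> B u -> u = 0) ->
    (forall a, A a -> a = 0) \/ (forall b, B b -> b = 0).

Definition fin_gen (R : nzRingType) (U : rmodType R) : Prop :=
  exists s : seq U, forall u : U, exists c : seq R^c,
    u = \sum_(i < size s) c`_i *: s`_i.

Definition is_dsum (R : nzRingType) (I : Type) (Y : I -> rmodType R)
    (X : rmodType R) (f : forall i, Y i -> X) : Prop :=
  [/\ (forall i, is_hom (f i)),
      (forall x : X, exists s : seq {i : I & Y i},
          x = \sum_(p <- s) f (tag p) (tagged p))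
    & (forall s : seq {i : I & Y i}, List.NoDup (map tag s) ->
          \sum_(p <- s) f (tag p) (tagged p) = 0 ->
          forall p, List.In p s -> tagged p = 0)].

Definition HomR (R : nzRingType) (M X : rmodType R) := {phi : M -> X | is_hom phi}.

(* Hom_R(M,X) ⊗_E M is the abelian group generated by symbols phi ⊗ m subject
   to biadditivity and E-balancedness ((phi·s) ⊗ m = phi ⊗ (s m), where
   (phi·s)(m) = phi(s(m))).  An element is represented by a finite list of
   pure tensors (a formal sum); [teq] is the congruence generated by the
   defining relations, so the tensor product is (seq _) / teq. *)
Inductive teq (R : nzRingType) (M X : rmodType R) :
    seq (HomR M X * M) -> seq (HomR M X * M) -> Prop :=
  | teq_refl l : teq l l
  | teq_sym l l' : teq l l' -> teq l' l
  | teq_trans l1 l2 l3 : teq l1 l2 -> teq l2 l3 -> teq l1 l3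
  | teq_cat l1 l1' l2 l2' : teq l1 l1' -> teq l2 l2' -> teq (l1 ++ l2) (l1' ++ l2')
  | teq_comm l1 l2 : teq (l1 ++ l2) (l2 ++ l1)
  | teq_addl (p q r : HomR M X) (m : M) :
      (forall x, sval r x = sval p x + sval q x) ->
      teq [:: (r, m)] [:: (p, m); (q, m)]
  | teq_addr (p : HomR M X) (m m' : M) : teq [:: (p, m + m')] [:: (p, m); (p, m')]
  | teq_zerol (p : HomR M X) (m : M) : (forall x, sval p x = 0) -> teq [:: (p, m)] [::]
  | teq_zeror (p : HomR M X) : teq [:: (p, 0)] [::]
  | teq_bal (p q : HomR M X) (s : M -> M) (m : M) :
      is_hom s -> (forall x, sval q x = sval p (s x)) ->
      teq [:: (q, m)] [:: (p, s m)].

Definition tscale (R : nzRingType) (M X : rmodType R) (r : R^c)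
    (l : seq (HomR M X * M)) : seq (HomR M X * M) :=
  map (fun pm => (pm.1, r *: pm.2)) l.

Definition tensor_eval (R : nzRingType) (M X : rmodType R)
    (l : seq (HomR M X * M)) : X :=
  \sum_(pm <- l) sval pm.1 pm.2.

(* Main.v *)
Require Import Defs.
From HB Require Import structures.
From mathcomp Require Import all_boot all_order all_algebra.
From Stdlib Require Import ClassicalEpsilon.
Set Implicit Arguments. Unset Strict Implicit. Unset Printing Implicit Defensive.
Import GRing.Theory.
Local Open Scope ring_scope.

Definition asb (P : Prop) : bool := if excluded_middle_informative P then true else false.
Lemma asbP (P : Prop) : reflect P (asb P).
Proof. rewrite /asb; case: excluded_middle_informative => h; constructor; done. Qed.

Section Sub.
Variables (R : nzRingType) (V : rmodType R) (A : V -> Prop) (HA : submodule A).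
Definition subm_of (h : submodule A) : Type := {x : V | asb (A x)}.
Local Notation subm := (subm_of HA).
HB.instance Definition _ := Choice.on subm.
Lemma subm_cl0 : asb (A 0). Proof. by apply/asbP; case: HA. Qed.
Lemma subm_clD (u v : subm) : asb (A (val u + val v)).
Proof. case: HA => _ h _ _; apply/asbP; apply: h; apply/asbP; [exact: (proj2_sig u)|exact: (proj2_sig v)]. Qed.
Lemma subm_clN (u : subm) : asb (A (- val u)).
Proof. case: HA => _ _ h _; apply/asbP; apply: h; apply/asbP; exact: (proj2_sig u). Qed.
Lemma subm_clZ (a : R^c) (u : subm) : asb (A (a *: val u)).
Proof. case: HA => _ _ _ h; apply/asbP; apply: h; apply/asbP; exact: (proj2_sig u). Qed.
Definition sm0 : subm := exist (fun x => asb (A x)) 0 subm_cl0.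
Definition smD (u v : subm) : subm := exist (fun x => asb (A x)) _ (subm_clD u v).
Definition smN (u : subm) : subm := exist (fun x => asb (A x)) _ (subm_clN u).
Definition smZ (a : R^c) (u : subm) : subm := exist (fun x => asb (A x)) _ (subm_clZ a u).
Lemma smA : associative smD. Proof. by move=> x y z; apply: val_inj; rewrite /= addrA. Qed.
Lemma smC : commutative smD. Proof. by move=> x y; apply: val_inj; rewrite /= addrC. Qed.
Lemma sm0D : left_id sm0 smD. Proof. by move=> x; apply: val_inj; rewrite /= add0r. Qed.
Lemma smND : left_inverse sm0 smN smD. Proof. by move=> x; apply: val_inj; rewrite /= addNr. Qed.
HB.instance Definition _ := GRing.isZmodule.Build subm smA smC sm0D smND.
Lemma smZA a b v : smZ a (smZ b v) = smZ (a * b) v. Proof. by apply: val_inj; rewrite /= scalerA. Qed.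
Lemma smZ1 : left_id 1 smZ. Proof. by move=> x; apply: val_inj; rewrite /= scale1r. Qed.
Lemma smZDr : right_distributive smZ +%R. Proof. by move=> a x y; apply: val_inj; rewrite /= scalerDr. Qed.
Lemma smZDl v : {morph smZ^~ v: a b / a + b}. Proof. by move=> a b; apply: val_inj; rewrite /= scalerDl. Qed.
HB.instance Definition _ := GRing.Zmodule_isLmodule.Build R^c subm smZA smZ1 smZDr smZDl.
Lemma val_hom : is_hom (fun u : subm => val u). Proof. by split. Qed.
End Sub.

Section Gen.
Variable R : nzRingType.

Section Hom.
Variables (U V : rmodType R) (f : U -> V) (hf : is_hom f).
Lemma hom0 : f 0 = 0.
Proof. by apply: (addrI (f 0)); rewrite -hf.1 !addr0. Qed.
Lemma homN x : f (- x) = - f x.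
Proof. apply/eqP; rewrite -subr_eq0 opprK -hf.1 addNr hom0 //. Qed.
Lemma homB x y : f (x - y) = f x - f y.
Proof. by rewrite hf.1 homN. Qed.
Lemma hom_sum (I : Type) (r : seq I) (F : I -> U) :
  f (\sum_(i <- r) F i) = \sum_(i <- r) f (F i).
Proof. exact: (big_morph f hf.1 hom0). Qed.
Lemma hom_sumP (I : Type) (r : seq I) (P : pred I) (F : I -> U) :
  f (\sum_(i <- r | P i) F i) = \sum_(i <- r | P i) f (F i).
Proof. exact: (big_morph f hf.1 hom0). Qed.
End Hom.

Lemma hom_comp (U V W : rmodType R) (f : U -> V) (g : V -> W) :
  is_hom f -> is_hom g -> is_hom (g \o f).
Proof. by move=> [f1 f2] [g1 g2]; split=> *; rewrite /= ?f1 ?g1 ?f2 ?g2. Qed.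

Lemma sub_sum (V : rmodType R) (A : V -> Prop) (I : Type) (r : seq I) (P : pred I) (F : I -> V) :
  submodule A -> (forall i, P i -> A (F i)) -> A (\sum_(i <- r | P i) F i).
Proof.
move=> [h0 hD _ _] hF; elim: r => [|a r IH]; first by rewrite big_nil.
rewrite big_cons; case: ifP => Pa //; exact: hD (hF _ Pa) IH.
Qed.

Lemma sub_sumF (V : rmodType R) (A : V -> Prop) (n : nat) (F : 'I_n -> V) :
  submodule A -> (forall i, A (F i)) -> A (\sum_(i < n) F i).
Proof. by move=> hA hF; apply: sub_sum. Qed.

Lemma subB (V : rmodType R) (A : V -> Prop) x y : submodule A -> A x -> A y -> A (x - y).
Proof. by move=> [_ hD hN _] ax ay; apply: hD => //; apply: hN. Qed.

Definition span (V : rmodType R) (t : seq V) (x : V) : Prop :=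
  exists c : seq R^c, x = \sum_(i < size t) c`_i *: t`_i.

Lemma span_sub (V : rmodType R) (t : seq V) : submodule (span t).
Proof.
split.
- by exists [::]; rewrite big1 // => i _; rewrite nth_nil scale0r.
- move=> u v [c1 ->] [c2 ->]; exists (mkseq (fun i => c1`_i + c2`_i) (size t)).
  rewrite -big_split /=; apply: eq_bigr => i _; rewrite nth_mkseq // scalerDl //.
- move=> u [c ->]; exists (mkseq (fun i => - c`_i) (size t)).
  rewrite -sumrN; apply: eq_bigr => i _; rewrite nth_mkseq // scaleNr //.
- move=> a u [c ->]; exists (mkseq (fun i => a * c`_i) (size t)).
  rewrite scaler_sumr; apply: eq_bigr => i _; rewrite nth_mkseq // scalerA //.
Qed.

Lemma span_mem (V : rmodType R) (t : seq V) x : x \in t -> span t x.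
Proof.
move=> xt; exists (mkseq (fun i => if i == index x t then 1 else 0) (size t)).
have hi : (index x t < size t)%N by rewrite index_mem.
rewrite (bigD1 (Ordinal hi)) //= nth_mkseq // eqxx scale1r nth_index // big1 ?addr0 //.
move=> i /eqP ne; rewrite nth_mkseq //; case: eqP => [e|]; last by rewrite scale0r.
by case: ne; apply: val_inj.
Qed.

Lemma span_min (V : rmodType R) (A : V -> Prop) (t : seq V) :
  submodule A -> (forall x, x \in t -> A x) -> forall x, span t x -> A x.
Proof.
move=> hA ht x [c ->]; apply: sub_sumF => // i.
case: hA => _ _ _ hZ; apply: hZ; apply: ht; exact: mem_nth.
Qed.

Lemma span_cons (V : rmodType R) (y : V) (t : seq V) x :
  span (y :: t) x -> exists r z, span t z /\ x = r *: y + z.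
Proof.
move=> [c ->]; exists c`_0, (\sum_(i < size t) c`_i.+1 *: t`_i); split.
  by exists (behead c); apply: eq_bigr => i _; rewrite nth_behead.
by rewrite big_ord_recl /=.
Qed.

Lemma span_hom (U V : rmodType R) (f : U -> V) (t : seq U) x :
  is_hom f -> span t x -> span (map f t) (f x).
Proof.
move=> hf [c ->]; exists c; rewrite size_map (hom_sum hf); apply: eq_bigr => i _.
by rewrite hf.2 (nth_map 0) // hom0.
Qed.

Lemma chain_mono (T : Type) (C : nat -> T -> Prop) :
  (forall n x, C n.+1 x -> C n x) -> forall m n, (m <= n)%N -> forall x, C n x -> C m x.
Proof.
move=> hC m n /subnK <-; elim: (n - m)%N => [|k IH] x //.
by rewrite addSn => /hC /IH.
Qed.

Lemma dcc (V : rmodType R) : right_artinian R -> forall (t : seq V) (C : nat -> V -> Prop),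
  (forall n, submodule (C n)) -> (forall n x, C n x -> span t x) ->
  (forall n x, C n.+1 x -> C n x) ->
  exists N, forall n, (N <= n)%N -> forall x, C N x -> C n x.
Proof.
move=> art; elim=> [|y t IH] C hsub hspan hdesc.
  exists 0%N => n _ x /hspan [c ->]; rewrite big_ord0; by case: (hsub n).
pose J n (r : R) := exists c z, [/\ C n c, span t z & (r : R^c) *: y = c + z].
have hJ : forall n, is_right_ideal (J n).
  move=> n; split.
  - exists 0, 0; split; first by case: (hsub n).
    + by case: (span_sub t).
    + by rewrite scale0r addr0.
  - move=> a b [c1 [z1 [h1 h1' e1]]] [c2 [z2 [h2 h2' e2]]].
    exists (c1 - c2), (z1 - z2); split; [exact: subB| exact: subB (span_sub t) _ _|].
    rewrite (scalerBl (a : R^c)) e1 e2; rewrite opprD !addrA; congr (_ + _).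
    by rewrite -!addrA; congr (_ + _); rewrite addrC.
  - move=> a r [c [z [h h' e]]]; exists ((r : R^c) *: c), ((r : R^c) *: z); split.
    + by case: (hsub n) => _ _ _; apply.
    + by case: (span_sub t) => _ _ _; apply.
    + by rewrite -scalerDr -e scalerA.
have hJd : forall n x, J n.+1 x -> J n x.
  by move=> n r [c [z [h h' e]]]; exists c, z; split => //; apply: hdesc.
have [N1 HN1] := art J hJ hJd.
pose C' n x := C n x /\ span t x.
have hC' : forall n, submodule (C' n).
  move=> n; case: (hsub n) => a1 a2 a3 a4; case: (span_sub t) => b1 b2 b3 b4.
  split; first by [split].
  - by move=> u v [? ?] [? ?]; split; [apply: a2| apply: b2].
  - by move=> u [? ?]; split; [apply: a3| apply: b3].
  - by move=> a u [? ?]; split; [apply: a4| apply: b4].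
have hC'd : forall n x, C' n.+1 x -> C' n x by move=> n x h; exact: (conj (hdesc _ _ h.1) h.2).
have [N2 HN2] := IH C' hC' (fun n x h => h.2) hC'd.
exists (maxn N1 N2) => n hn x hx.
have [r [z [hz ex]]] := span_cons (hspan _ _ hx).
have hn1 : (N1 <= n)%N by apply: leq_trans hn; apply: leq_maxl.
have hn2 : (N2 <= n)%N by apply: leq_trans hn; apply: leq_maxr.
have JN : J N1 r.
  apply: (chain_mono hJd (leq_maxl N1 N2)).
  exists x, (- z); split => //; first by case: (span_sub t) => _ _ hN _; apply: hN.
  by rewrite ex addrK.
have [c [z' [hc hz' e]]] := HN1 n hn1 r JN.
have hcN : C (maxn N1 N2) c by apply: (chain_mono hdesc hn).
have hd : C' N2 (x - c).
  apply: (chain_mono hC'd (leq_maxr N1 N2)).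
  split; first exact: subB.
  have -> : x - c = z + z' by rewrite ex e [_ - c]addrC addrA addKr addrC.
  by case: (span_sub t) => _ hD _ _; apply: hD.
have [hd1 _] := HN2 n hn2 _ hd.
have -> : x = (x - c) + c by rewrite subrK.
by case: (hsub n) => _ hD _ _; apply: hD.
Qed.

End Gen.

Definition cchoose (T : Type) (P : T -> Prop) (d : T) : T :=
  match excluded_middle_informative (exists x, P x) with
  | left h => proj1_sig (constructive_indefinite_description _ h)
  | right _ => d end.
Lemma cchooseP (T : Type) (P : T -> Prop) d : (exists x, P x) -> P (cchoose P d).
Proof.
rewrite /cchoose; case: excluded_middle_informative => // h _.
exact: proj2_sig (constructive_indefinite_description _ h).
Qed.

Section Decomp.
Variables (R : nzRingType) (V : rmodType R) (A B : V -> Prop).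
Hypotheses (sA : submodule A) (sB : submodule B) (hI : forall x, A x -> B x -> x = 0).
Definition dsumP (x : V) := exists a b, [/\ A a, B b & x = a + b].
Definition pA (x : V) := cchoose (fun a => A a /\ exists b, B b /\ x = a + b) 0.

Lemma pA_uniq x a b : A a -> B b -> x = a + b -> pA x = a.
Proof.
move=> ha hb e.
have [h1 [b' [h2 e']]] : A (pA x) /\ exists b, B b /\ x = pA x + b.
  by apply: (@cchooseP _ (fun a => A a /\ exists b, B b /\ x = a + b)); exists a; split => //; exists b.
have d : pA x - a = b - b'.
  have h : pA x + b' = a + b by rewrite -e' -e.
  by apply/eqP; rewrite subr_eq addrAC [b + a]addrC -h addrK.
apply/eqP; rewrite -subr_eq0; apply/eqP; apply: hI; first exact: subB.
rewrite d; exact: subB.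
Qed.

Lemma pA_spec x : dsumP x -> A (pA x) /\ exists b, B b /\ x = pA x + b.
Proof. move=> [a [b [ha hb e]]]; apply: (@cchooseP _ (fun a => A a /\ exists b, B b /\ x = a + b)); exists a; split => //; by exists b. Qed.

Lemma pA_hom : (forall x y, dsumP x -> dsumP y -> pA (x + y) = pA x + pA y) /\
  (forall c x, dsumP x -> pA (c *: x) = c *: pA x).
Proof.
split.
- move=> x y hx hy; have [a1 [b1 [hb1 e1]]] := pA_spec hx; have [a2 [b2 [hb2 e2]]] := pA_spec hy.
  apply: (pA_uniq (b := b1 + b2)).
  + by case: sA => _ h _ _; apply: h.
  + by case: sB => _ h _ _; apply: h.
  + by rewrite {1}e1 {1}e2 (addrACA (pA x)).
- move=> c x hx; have [a1 [b1 [hb1 e1]]] := pA_spec hx.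
  apply: (pA_uniq (b := c *: b1)).
  + by case: sA => _ _ _ h; apply: h.
  + by case: sB => _ _ _ h; apply: h.
  + by rewrite {1}e1 scalerDr.
Qed.

Lemma pA_id a : A a -> pA a = a.
Proof.
move=> ha; apply: (pA_uniq (b := 0)); first exact: ha.
  by case: sB.
by rewrite addr0.
Qed.
End Decomp.

Lemma dsumC (R : nzRingType) (V : rmodType R) (A B : V -> Prop) x : dsumP A B x -> dsumP B A x.
Proof. by move=> [a [b [ha hb e]]]; exists b, a; split => //; rewrite addrC. Qed.

Lemma pA_sum (R : nzRingType) (V : rmodType R) (A B : V -> Prop) :
  submodule A -> submodule B -> (forall x, A x -> B x -> x = 0) ->
  forall x, dsumP A B x -> x = pA A B x + pA B A x.
Proof.
move=> sA sB hI x hx; have [ha [b [hb e]]] := pA_spec hx.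
have hI' : forall x, B x -> A x -> x = 0 by move=> y h1 h2; apply: hI.
have -> : pA B A x = b.
  apply: (pA_uniq sB sA hI' (b := pA A B x)); first exact: hb.
    exact: ha.
  by rewrite (addrC b).
exact: e.
Qed.

Section Main.
Variables (R : nzRingType) (M X : rmodType R).

Definition homon (D : X -> Prop) (p : X -> M) :=
  (forall x y, D x -> D y -> p (x + y) = p x + p y) /\
  (forall a x, D x -> p (a *: x) = a *: p x).

Definition good (D : X -> Prop) := exists E : seq (HomR M X * (X -> M)),
  (forall pe, List.In pe E -> homon D pe.2) /\
  (forall x, D x -> x = \sum_(pe <- E) sval pe.1 (pe.2 x)).

Lemma good_ext (D D' : X -> Prop) : (forall x, D x <-> D' x) -> good D -> good D'.
Proof.
move=> hD [E [h1 h2]]; exists E; split.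
  move=> pe /h1 [k1 k2]; split => *; [apply: k1|apply: k2]; by apply/hD.
by move=> x /hD; apply: h2.
Qed.

Lemma good0 (D : X -> Prop) : (forall x, D x -> x = 0) -> good D.
Proof. by move=> h; exists [::]; split => // x /h ->; rewrite big_nil. Qed.

Lemma homon_comp (A D : X -> Prop) (q : X -> X) (p : X -> M) :
  homon A p -> (forall x, D x -> A (q x)) ->
  (forall x y, D x -> D y -> q (x + y) = q x + q y) ->
  (forall a x, D x -> q (a *: x) = a *: q x) -> homon D (p \o q).
Proof.
move=> [p1 p2] hq q1 q2; split => * /=.
  by rewrite q1 // p1 //; apply: hq.
by rewrite q2 // p2 //; apply: hq.
Qed.

Lemma good_sum (A B : X -> Prop) : submodule A -> submodule B ->
  (forall x, A x -> B x -> x = 0) -> good A -> good B -> good (dsumP A B).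
Proof.
move=> sA sB hI [EA [hA1 hA2]] [EB [hB1 hB2]].
have hI' : forall x, B x -> A x -> x = 0 by move=> y h1 h2; apply: hI.
have [pAD pAZ] := pA_hom sA sB hI; have [pBD pBZ] := pA_hom sB sA hI'.
exists ([seq (pe.1, pe.2 \o pA A B) | pe <- EA] ++ [seq (pe.1, pe.2 \o pA B A) | pe <- EB]).
split.
  move=> pe /(List.in_app_or _ _ _) [] /(List.in_map_iff _ _ _) [pe0 [<- hin]] /=.
  - apply: (homon_comp (A := A)); first exact: hA1.
    + by move=> x hx; have [] := pA_spec hx.
    + exact: pAD.
    + exact: pAZ.
  - apply: (homon_comp (A := B)); first exact: hB1.
    + by move=> x /dsumC hx; have [] := pA_spec hx.
    + by move=> x y /dsumC hx /dsumC hy; apply: pBD.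
    + by move=> a x /dsumC hx; apply: pBZ.
move=> x hx; rewrite big_cat !big_map /=.
rewrite {1}(pA_sum sA sB hI hx); congr (_ + _).
  by apply: hA2; have [] := pA_spec hx.
by apply: hB2; have [] := pA_spec (dsumC hx).
Qed.

End Main.

Section Tensor.
Variables (R : nzRingType) (M X : rmodType R).
Local Notation T := (HomR M X * M)%type.

Lemma is_hom0 : is_hom (fun _ : M => (0 : X)).
Proof. by split => *; rewrite ?addr0 ?scaler0. Qed.

Definition mkHom (f : M -> X) : HomR M X :=
  match excluded_middle_informative (is_hom f) with
  | left h => exist _ f h | right _ => exist _ _ is_hom0 end.
Lemma mkHomE f : is_hom f -> sval (mkHom f) = f.
Proof. by rewrite /mkHom; case: excluded_middle_informative. Qed.

Lemma is_hom_sum (hs : seq (HomR M X)) : is_hom (fun x => \sum_(h <- hs) sval h x).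
Proof.
split.
  move=> u v; rewrite -big_split /=; apply: eq_bigr => h _; exact: (proj2_sig h).1.
move=> a u; rewrite scaler_sumr; apply: eq_bigr => h _; exact: (proj2_sig h).2.
Qed.

Lemma sum_eq_in (A : Type) (V : rmodType R) (s : seq A) (F G : A -> V) :
  (forall a, List.In a s -> F a = G a) -> \sum_(a <- s) F a = \sum_(a <- s) G a.
Proof.
elim: s => [|a s IH] h; first by rewrite !big_nil.
rewrite !big_cons h /=; last by left.
by rewrite IH // => b hb; apply: h; right.
Qed.

Lemma teq_map (A : Type) (E : seq A) (f g : A -> T) :
  (forall a, List.In a E -> teq [:: f a] [:: g a]) -> teq (map f E) (map g E).
Proof.
elim: E => [|a E IH] h /=; first exact: teq_refl.
apply: (teq_cat (l1 := [:: f a]) (l1' := [:: g a])); first by apply: h; left.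
by apply: IH => b hb; apply: h; right.
Qed.

Lemma teq_zero_list (A : Type) (E : seq A) (f : A -> T) :
  (forall a, List.In a E -> teq [:: f a] [::]) -> teq (map f E) [::].
Proof.
elim: E => [|a E IH] h /=; first exact: teq_refl.
apply: (teq_cat (l1 := [:: f a]) (l1' := [::])); first by apply: h; left.
by apply: IH => b hb; apply: h; right.
Qed.

Lemma teq_merge (A : Type) (E : seq A) (f g h : A -> T) :
  (forall a, List.In a E -> teq [:: f a; g a] [:: h a]) ->
  teq (map f E ++ map g E) (map h E).
Proof.
elim: E => [|a E IH] H /=; first exact: teq_refl.
apply: (@teq_trans _ _ _ _ ([:: f a; g a] ++ (map f E ++ map g E))).
  have -> : f a :: map f E ++ g a :: map g E = [:: f a] ++ ((map f E ++ [:: g a]) ++ map g E).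
    by rewrite -catA.
  have -> : [:: f a; g a] ++ (map f E ++ map g E) = [:: f a] ++ (([:: g a] ++ map f E) ++ map g E).
    by [].
  apply: teq_cat; first exact: teq_refl.
  apply: teq_cat; last exact: teq_refl.
  exact: teq_comm.
apply: (teq_cat (l1 := [:: f a; g a]) (l1' := [:: h a])); first by apply: H; left.
by apply: IH => b hb; apply: H; right.
Qed.

Lemma teq_split (hs : seq (HomR M X)) (phi : HomR M X) (m : M) :
  (forall x, sval phi x = \sum_(h <- hs) sval h x) ->
  teq [:: (phi, m)] [seq (h, m) | h <- hs].
Proof.
elim: hs phi => [|h hs IH] phi H /=.
  by apply: teq_zerol => x; rewrite H big_nil.
pose psi : HomR M X := exist _ _ (is_hom_sum hs).
apply: (@teq_trans _ _ _ _ [:: (h, m); (psi, m)]).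
  by apply: teq_addl => x; rewrite H big_cons.
apply: (teq_cat (l1 := [:: (h, m)]) (l1' := [:: (h, m)]) (l2 := [:: (psi, m)]) (l2' := [seq (h0, m) | h0 <- hs])); first exact: teq_refl.
exact: IH.
Qed.

Lemma eval_teq (l l' : seq T) : teq l l' -> tensor_eval l = tensor_eval l'.
Proof.
rewrite /tensor_eval; elim=> {l l'}.
- by [].
- by move=> l l' _ ->.
- by move=> l1 l2 l3 _ -> _ ->.
- by move=> l1 l1' l2 l2' _ e1 _ e2; rewrite !big_cat e1 e2.
- by move=> l1 l2; rewrite !big_cat; exact: addrC.
- by move=> p q r m h; rewrite !big_cons !big_nil /= h !addr0.
- by move=> p m m'; rewrite !big_cons !big_nil /= !addr0 (proj2_sig p).1.
- by move=> p m h; rewrite !big_cons !big_nil /= h addr0.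
- by move=> p; rewrite !big_cons !big_nil /= addr0 (hom0 (proj2_sig p)).
- by move=> p q s m _ h; rewrite !big_cons !big_nil /= h.
Qed.

End Tensor.

Section Proj.
Local Unset Implicit Arguments.
Variables (R : nzRingType) (n : nat) (Ms : 'I_n -> rmodType R) (M : rmodType R)
  (iota : forall i, Ms i -> M).
Hypothesis hd : is_dsum iota.

Definition getc (i : 'I_n) (p : {j : 'I_n & Ms j}) : Ms i :=
  match tag p =P i with
  | ReflectT e => eq_rect (tag p) Ms (tagged p) i e
  | ReflectF _ => 0 end.

Lemma getc_same i (y : Ms i) : getc i (existT _ i y) = y.
Proof.
rewrite /getc /=; case: eqP => [e|]; last by [].
by rewrite (eq_irrelevance e (erefl i)).
Qed.

Lemma getc_other i p : tag p != i -> getc i p = 0.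
Proof. by rewrite /getc; case: eqP. Qed.

Lemma getc_scale i (a : R^c) (p : {j : 'I_n & Ms j}) : getc i (existT Ms (tag p) (a *: tagged p)) = a *: getc i p.
Proof.
case: p => j y; rewrite /getc /=; case: eqP => [e|]; last by rewrite scaler0.
by case: _ / e.
Qed.

Lemma iota_hom (i : 'I_n) : is_hom (iota i).
Proof. by case: hd => h _ _; apply: h. Qed.

Lemma getc_dec p : \sum_(j : 'I_n) iota j (getc j p) = iota (tag p) (tagged p).
Proof.
rewrite (bigD1 (tag p)) //= big1 ?addr0.
  by case: p => j y /=; rewrite getc_same.
move=> j hj; rewrite getc_other ?(hom0 (iota_hom j)) //.
by rewrite eq_sym.
Qed.

Definition comp (i : 'I_n) (s : seq {j : 'I_n & Ms j}) : Ms i := \sum_(p <- s) getc i p.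
Definition dval (s : seq {j : 'I_n & Ms j}) : M := \sum_(p <- s) iota (tag p) (tagged p).

Lemma sum_norm s : \sum_(j : 'I_n) iota j (comp j s) = dval s.
Proof.
rewrite /dval /comp; under eq_bigr do rewrite (hom_sum (iota_hom _)).
rewrite exchange_big /=; apply: eq_bigr => p _; exact: getc_dec.
Qed.

Lemma NoDup_uniq (T : eqType) (s : seq T) : uniq s -> List.NoDup s.
Proof.
elim: s => [|a s IH] /=; first by constructor.
move=> /andP [ha hs]; constructor; last exact: IH.
move=> hin; move: ha; suff -> : a \in s by []; elim: s hin {IH hs} => //= b s IH [->|h].
  by rewrite inE eqxx.
by rewrite inE IH ?orbT.
Qed.

Lemma comp_unique s s' (i : 'I_n) : dval s = dval s' -> comp i s = comp i s'.
Proof.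
move=> e.
pose d := [seq existT Ms j (comp j s - comp j s') | j <- index_enum 'I_n].
have hnd : List.NoDup (map tag d).
  rewrite -map_comp /= map_id; apply: NoDup_uniq; exact: index_enum_uniq.
have h0 : \sum_(p <- d) iota (tag p) (tagged p) = 0.
  rewrite big_map /=.
  have -> : \sum_(j <- index_enum 'I_n) iota j (comp j s - comp j s')
     = \sum_(j : 'I_n) iota j (comp j s) - \sum_(j : 'I_n) iota j (comp j s').
    rewrite -sumrB; apply: eq_bigr => j _; exact: (homB (iota_hom j)).
  by rewrite !sum_norm e subrr.
case: hd => _ _ h; have := h d hnd h0 (existT Ms i (comp i s - comp i s')).
move=> /(_ _) /= H; apply/eqP; rewrite -subr_eq0; apply/eqP; apply: H.
apply/List.in_map_iff; exists i; split => //.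
suff : i \in index_enum 'I_n.
  elim: (index_enum 'I_n) => //= a r IH; rewrite inE => /orP [/eqP ->|]; first by left.
  by move=> /IH; right.
exact: mem_index_enum.
Qed.

Definition proj (i : 'I_n) (m : M) : Ms i := comp i (cchoose (fun s => m = dval s) [::]).

Lemma proj_spec (i : 'I_n) m s : m = dval s -> proj i m = comp i s.
Proof.
move=> e; apply: comp_unique; rewrite -e.
have : m = dval (cchoose (fun s => m = dval s) [::]).
  apply: (@cchooseP _ (fun s => m = dval s)); exists s; exact: e.
by move=> <-.
Qed.

Lemma dval_ex m : exists s, m = dval s.
Proof. by case: hd => _ h _; apply: h. Qed.

Lemma proj_hom (i : 'I_n) : is_hom (proj i).
Proof.
split.
  move=> u v; have [s1 e1] := dval_ex u; have [s2 e2] := dval_ex v.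
  rewrite (proj_spec i _ _ e1) (proj_spec i _ _ e2) (proj_spec i _ (s1 ++ s2)).
    by rewrite /comp big_cat.
  by rewrite /dval big_cat e1 e2.
move=> a u; have [s e] := dval_ex u.
rewrite (proj_spec i _ _ e) (proj_spec i _ [seq existT Ms (tag p) (a *: tagged p) | p <- s]).
  by rewrite /comp big_map scaler_sumr; apply: eq_bigr => p _; exact: getc_scale.
rewrite /dval big_map e /dval scaler_sumr; apply: eq_bigr => p _ /=.
by rewrite (iota_hom _).2.
Qed.

Lemma proj_iota (i : 'I_n) y : proj i (iota i y) = y.
Proof.
rewrite (proj_spec i _ [:: existT Ms i y]); first by rewrite /comp big_seq1 getc_same.
by rewrite /dval big_seq1.
Qed.

End Proj.

Section Ins.
Variables (R : nzRingType) (V : rmodType R) (A : V -> Prop) (HA : submodule A).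
Definition ins (x : V) : subm_of HA := cchoose (fun u : subm_of HA => val u = x) 0.
Lemma ins_val x : A x -> val (ins x) = x.
Proof.
move=> ax; apply: (@cchooseP _ (fun u : subm_of HA => val u = x)).
have h : asb (A x) by apply/asbP.
by exists (exist (fun x => asb (A x)) x h).
Qed.
Lemma subm_in (u : subm_of HA) : A (val u).
Proof. by apply/asbP; exact: (proj2_sig u). Qed.
End Ins.

Lemma sub_ext (R : nzRingType) (V : rmodType R) (A B : V -> Prop) :
  (forall x, A x <-> B x) -> submodule A -> submodule B.
Proof.
move=> h [a1 a2 a3 a4]; split.
- by apply/h.
- by move=> u v /h hu /h hv; apply/h; apply: a2.
- by move=> u /h hu; apply/h; apply: a3.
- by move=> a u /h hu; apply/h; apply: a4.
Qed.

Lemma img_sub (R : nzRingType) (U V : rmodType R) (f : U -> V) (A : U -> Prop) :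
  is_hom f -> submodule A -> submodule (fun x => exists a, A a /\ f a = x).
Proof.
move=> hf [a1 a2 a3 a4]; split.
- by exists 0; split => //; exact: hom0.
- by move=> u v [a [ha <-]] [b [hb <-]]; exists (a + b); split; [apply: a2|rewrite hf.1].
- by move=> u [a [ha <-]]; exists (- a); split; [apply: a3|rewrite (homN hf)].
- by move=> c u [a [ha <-]]; exists (c *: a); split; [apply: a4|rewrite hf.2].
Qed.

Lemma dsum_sub (R : nzRingType) (V : rmodType R) (A B : V -> Prop) :
  submodule A -> submodule B -> submodule (dsumP A B).
Proof.
move=> [a1 a2 a3 a4] [b1 b2 b3 b4]; split.
- by exists 0, 0; split => //; rewrite addr0.
- move=> u v [a [b [ha hb ->]]] [a' [b' [ha' hb' ->]]]; exists (a + a'), (b + b').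
  by split; [apply: a2|apply: b2|rewrite (addrACA a)].
- move=> u [a [b [ha hb ->]]]; exists (- a), (- b).
  by split; [apply: a3|apply: b3|rewrite opprD].
- move=> c u [a [b [ha hb ->]]]; exists (c *: a), (c *: b).
  by split; [apply: a4|apply: b4|rewrite scalerDr].
Qed.

Lemma homon_sum (R : nzRingType) (U V : rmodType R) (D : U -> Prop) (p : U -> V) :
  submodule D -> (forall x y, D x -> D y -> p (x + y) = p x + p y) ->
  forall (I : Type) (r : seq I) (F : I -> U), (forall i, D (F i)) ->
  p (\sum_(i <- r) F i) = \sum_(i <- r) p (F i).
Proof.
move=> sD hp I r F hF.
have p0 : p 0 = 0.
  by apply: (addrI (p 0)); rewrite -hp ?addr0 //; case: sD.
elim: r => [|a r IH]; first by rewrite !big_nil.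
by rewrite !big_cons hp ?IH //; apply: sub_sum.
Qed.

Lemma span_proj (R : nzRingType) (V : rmodType R) (A B : V -> Prop) (t : seq V) :
  submodule A -> submodule B -> (forall x, A x -> B x -> x = 0) ->
  (forall x, span t x <-> dsumP A B x) -> forall x, A x <-> span (map (pA A B) t) x.
Proof.
move=> sA sB hI ht x; split.
  move=> ax; have : span t x by apply/ht; exists x, 0; split => //; [case: sB|rewrite addr0].
  case=> c e; exists c; rewrite -(pA_id sA sB hI ax) e.
  rewrite (homon_sum (dsum_sub sA sB) (pA_hom sA sB hI).1).
    rewrite size_map; apply: eq_bigr => i _.
    rewrite (pA_hom sA sB hI).2 ?(nth_map 0) //.
    by apply/ht; apply: span_mem; exact: mem_nth.
  move=> i; case: (dsum_sub sA sB) => _ _ _ h4; apply: h4.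
  by apply/ht; apply: span_mem; exact: mem_nth.
apply: span_min => // y /mapP [z zt ->].
by have [] := @pA_spec _ _ A B z (proj1 (ht z) (span_mem zt)).
Qed.

Section Core.
Local Unset Implicit Arguments.
Variables (R : nzRingType) (S : lmodType R^c -> Prop) (n : nat) (Ms : 'I_n -> lmodType R^c)
  (M : lmodType R^c) (iota : forall i, Ms i -> M) (X : lmodType R^c).
Hypothesis art : right_artinian R.
Hypothesis hsubc : forall (U V : lmodType R^c) (f : U -> V),
      is_hom f -> injective f -> S V -> S U.
Hypothesis hcls : forall Y : lmodType R^c, S Y -> indecomposable Y -> fin_gen Y ->
      exists i, isomorphic Y (Ms i).
Hypothesis hd : is_dsum iota.
Hypothesis SX : S X.

Local Notation goodM D := (@good R M X D).

Lemma good_indec (D : X -> Prop) (hD : submodule D) (t : seq X) :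
  (forall x, D x <-> span t x) -> indecomposable (subm_of hD) -> goodM D.
Proof.
move=> hDt hind.
have vh : is_hom (fun u : subm_of hD => val u) by apply: val_hom.
have fg : fin_gen (subm_of hD).
  exists (map (ins hD) t) => u.
  have : span t (val u) by apply/hDt; exact: subm_in.
  case=> c e; exists c; apply: val_inj; rewrite e (hom_sum vh) size_map.
  apply: eq_bigr => i _; rewrite vh.2 (nth_map 0) // ins_val //.
  by apply/hDt; apply: span_mem; exact: mem_nth.
have SD : S (subm_of hD) by apply: (hsubc _ _ _ vh val_inj SX).
have [i [f [hf [g fg1 fg2]]]] := hcls _ SD hind fg.
have hg : is_hom g.
  split.
    by move=> u v; rewrite -{1}(fg2 u) -{1}(fg2 v) -hf.1 fg1.
  by move=> a u; rewrite -{1}(fg2 u) -hf.2 fg1.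
have he : is_hom (fun m => val (g (proj _ _ _ _ iota i m))).
  exact: (hom_comp (proj_hom _ _ _ _ _ hd i) (hom_comp hg vh)).
pose e : HomR M X := exist _ _ he.
pose p := fun x => iota i (f (ins hD x)).
have insD : forall x y, D x -> D y -> ins hD (x + y) = ins hD x + ins hD y.
  move=> x y hx hy; apply: val_inj; rewrite vh.1 !ins_val //.
  by have [_ h _ _] := hD; apply: h.
have insZ : forall a x, D x -> ins hD (a *: x) = a *: ins hD x.
  move=> a x hx; apply: val_inj; rewrite vh.2 !ins_val //.
  by have [_ _ _ h] := hD; apply: h.
have ih : is_hom (iota i) by exact: (iota_hom _ _ _ _ _ hd i).
exists [:: (e, p)]; split.
  move=> pe [<-|[]]; split => /=.
    by move=> x y hx hy; rewrite /p insD // hf.1 ih.1.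
  by move=> a x hx; rewrite /p insZ // hf.2 ih.2.
move=> x hx; rewrite big_seq1 /= /p (proj_iota _ _ _ _ _ hd) fg1 ins_val //.
Qed.

Definition Bad (D : X -> Prop) := (exists t, forall x, D x <-> span t x) /\ ~ goodM D.

Lemma step (D : X -> Prop) : Bad D ->
  exists D', Bad D' /\ (forall x, D' x -> D x) /\ (exists x, D x /\ ~ D' x).
Proof.
move=> [[t ht] hng].
have sD : submodule D by apply: (sub_ext (fun x => iff_sym (ht x)) (span_sub t)).
apply: NNPP => hno; apply: (hng); apply: (good_indec D sD t ht).
have vh : is_hom (fun u : subm_of sD => val u) by apply: val_hom.
split.
  apply: NNPP => hz; apply: (hng); apply: good0 => x hx; apply: NNPP => hx0.
  apply: hz; exists (ins sD x) => e; apply: hx0.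
  by rewrite -(ins_val sD hx) e; exact: (hom0 vh).
move=> A B sA sB hsp hind; apply: NNPP => hn.
have [a0 [ha0 na0]] : exists a, A a /\ a <> 0.
  apply: NNPP => h; apply: (hn); left => a ha; apply: NNPP => na; apply: h; by exists a.
have [b0 [hb0 nb0]] : exists b, B b /\ b <> 0.
  apply: NNPP => h; apply: (hn); right => b hb; apply: NNPP => nb; apply: h; by exists b.
pose A' := fun x => exists a, A a /\ val a = x.
pose B' := fun x => exists b, B b /\ val b = x.
have sA' : submodule A' by apply: img_sub.
have sB' : submodule B' by apply: img_sub.
have hI' : forall x, A' x -> B' x -> x = 0.
  move=> x [a [ha <-]] [b [hb eb]].
  have eab : a = b by apply: val_inj.
  by rewrite (hind a ha) ?(hom0 vh) // eab.
have hDs : forall x, span t x <-> dsumP A' B' x.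
  move=> x; split.
    move=> /ht hx; have [a [b [ha hb e]]] := hsp (ins sD x).
    exists (val a), (val b); split; [by exists a| by exists b|].
    by rewrite -vh.1 -e ins_val.
  move=> [_ [_ [[a [ha <-]] [b [hb <-]] ->]]]; apply/ht; rewrite -vh.1; exact: subm_in.
have nA : ~ A' (val b0).
  move=> h; apply: nb0; apply: val_inj; rewrite (hom0 vh); apply: hI' => //.
  by exists b0.
have nB : ~ B' (val a0).
  move=> h; apply: na0; apply: val_inj; rewrite (hom0 vh); apply: hI' => //.
  by exists a0.
have inD : forall x, dsumP A' B' x -> D x by move=> x /hDs /ht.
case: (classic (goodM A')) => gA; last first.
  apply: (hno); exists A'; split; last split.
  - by split => //; exists (map (pA A' B') t); apply: span_proj.
  - by move=> x ax; apply: inD; exists x, 0; split => //; [case: sB'|rewrite addr0].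
  - by exists (val b0); split => //; apply: subm_in.
case: (classic (goodM B')) => gB; last first.
  apply: (hno); exists B'; split; last split.
  - split => //; exists (map (pA B' A') t); apply: span_proj => //.
    + by move=> x h1 h2; apply: hI'.
    + by move=> x; split => [/hDs /dsumC | /dsumC /hDs].
  - by move=> x bx; apply: inD; exists 0, x; split => //; [case: sA'|rewrite add0r].
  - by exists (val a0); split => //; apply: subm_in.
have gs := good_sum sA' sB' hI' gA gB.
apply: (hng); apply: (good_ext _ gs).
by move=> x; split => [/inD //|hx]; apply/hDs/ht.
Qed.

End Core.

Lemma all_good (R : nzRingType) (S : lmodType R^c -> Prop) (n : nat) (Ms : 'I_n -> lmodType R^c)
  (M : lmodType R^c) (iota : forall i, Ms i -> M) (X : lmodType R^c) :
  right_artinian R ->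
  (forall (U V : lmodType R^c) (f : U -> V), is_hom f -> injective f -> S V -> S U) ->
  (forall Y : lmodType R^c, S Y -> indecomposable Y -> fin_gen Y ->
      exists i, isomorphic Y (Ms i)) ->
  is_dsum iota -> S X -> forall t0 : seq X, @good R M X (span t0).
Proof.
move=> art hsubc hcls hd SX t0; apply: NNPP => hng0.
pose Bd := Bad R M X.
pose P (D D' : X -> Prop) := Bd D' /\ (forall x, D' x -> D x) /\ (exists x, D x /\ ~ D' x).
pose stp D := cchoose (P D) D.
pose C k := iter k stp (span t0).
have hB : forall k, Bd (C k) /\ (P (C k) (C k.+1)).
  elim=> [|k [IH _]].
    have b0 : Bd (C 0) by split => //; exists t0.
    by split => //; apply: (@cchooseP _ (P (C 0))); apply: (step R S n Ms M iota X hsubc hcls hd SX).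
  have hP : P (C k) (C k.+1).
    by apply: (@cchooseP _ (P (C k))); apply: (step R S n Ms M iota X hsubc hcls hd SX).
  split; first by case: hP.
  by apply: (@cchooseP _ (P (C k.+1))); apply: (step R S n Ms M iota X hsubc hcls hd SX); case: hP.
have hsub : forall k x, C k.+1 x -> C k x by move=> k; case: (hB k) => _ [_ [h _]].
have sC : forall k, submodule (C k).
  move=> k; case: (hB k) => [[[t ht] _] _].
  exact: (sub_ext (fun x => iff_sym (ht x)) (span_sub t)).
have inspan : forall k x, C k x -> span t0 x.
  by move=> k x h; apply: (chain_mono hsub (leq0n k) h).
have [N HN] := dcc art sC inspan hsub.
case: (hB N) => _ [_ [_ [x [h1 h2]]]]; apply: h2; apply: HN => //.
Qed.

Lemma sub_sum_in (R : nzRingType) (V : rmodType R) (A : V -> Prop) (I : Type) (r : seq I) (F : I -> V) :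
  submodule A -> (forall i, List.In i r -> A (F i)) -> A (\sum_(i <- r) F i).
Proof.
move=> sA; elim: r => [|a r IH] h; first by rewrite big_nil; case: sA.
rewrite big_cons; case: sA => _ hD _ _; apply: hD; first by apply: h; left.
by apply: IH => i hi; apply: h; right.
Qed.

Lemma in_map_mem (A : Type) (B : eqType) (f : A -> B) s a : List.In a s -> f a \in map f s.
Proof. elim: s => //= b s IH [->|h]; rewrite inE; first by rewrite eqxx. by rewrite IH ?orbT. Qed.

Lemma L_exp (R : nzRingType) (M X : rmodType R) (Y : X -> Prop) (sY : submodule Y)
  (E : seq (HomR M X * (X -> M))) :
  (forall pe, List.In pe E -> homon Y pe.2) ->
  (forall x, Y x -> x = \sum_(pe <- E) sval pe.1 (pe.2 x)) ->
  forall l0 : seq (HomR M X * M), (forall pm, List.In pm l0 -> forall m, Y (sval pm.1 m)) ->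
  teq l0 [seq (pe.1, pe.2 (tensor_eval l0)) | pe <- E].
Proof.
move=> hE1 hE2; elim=> [|[phi m] l1 IH] hl.
  rewrite /tensor_eval big_nil; apply: teq_sym; apply: teq_zero_list => pe hin /=.
  have p0 : pe.2 0 = 0.
    have Y0 : Y 0 by case: sY.
    by apply: (addrI (pe.2 0)); rewrite -(hE1 pe hin).1 ?addr0.
  by rewrite p0; exact: teq_zeror.
have hl1 : forall pm', List.In pm' l1 -> forall m, Y (sval pm'.1 m) by move=> pm' h; apply: hl; right.
have hphi : forall m, Y (sval phi m) by move=> m'; apply: (hl (phi, m)); left.
have Yv : Y (tensor_eval l1) by apply: sub_sum_in => // pm' h; apply: hl1.
have -> : tensor_eval ((phi, m) :: l1) = sval phi m + tensor_eval l1.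
  by rewrite /tensor_eval big_cons.
apply: (@teq_trans _ _ _ _ ([seq (pe.1, pe.2 (sval phi m)) | pe <- E] ++
                          [seq (pe.1, pe.2 (tensor_eval l1)) | pe <- E])); last first.
  apply: teq_merge => pe hin /=; rewrite (hE1 pe hin).1 //; exact: teq_sym (teq_addr _ _ _).
change ((phi, m) :: l1) with ([:: (phi, m)] ++ l1); apply: teq_cat; last exact: IH.
pose hc (pe : HomR M X * (X -> M)) := mkHom (fun x => sval pe.1 (pe.2 (sval phi x))).
have hs : forall pe, List.In pe E -> is_hom (fun x => pe.2 (sval phi x)).
  move=> pe hin; have [k1 k2] := hE1 pe hin; have [f1 f2] := proj2_sig phi.
  by split => *; rewrite ?f1 ?f2 ?k1 ?k2.
have hcE : forall pe, List.In pe E -> is_hom (fun x => sval pe.1 (pe.2 (sval phi x))).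
  by move=> pe hin; exact: (hom_comp (hs pe hin) (proj2_sig pe.1)).
apply: (@teq_trans _ _ _ _ [seq (hc pe, m) | pe <- E]).
  have H := @teq_split R M X (map hc E) phi m.
  rewrite -map_comp in H; apply: H => x; rewrite big_map (hE2 _ (hphi x)).
  by apply: sum_eq_in => pe hin; rewrite mkHomE //; exact: hcE.
apply: teq_map => pe hin /=.
apply: (teq_bal (p := pe.1) (q := hc pe) (s := fun x => pe.2 (sval phi x))); first exact: hs.
by move=> x; rewrite mkHomE //; exact: hcE.
Qed.

Unset Implicit Arguments.

Theorem lemma12 (R : nzRingType) (S : lmodType R^c -> Prop)
    (n : nat) (Ms : 'I_n -> lmodType R^c)
    (M : lmodType R^c) (iota : forall i, Ms i -> M)
    (X : lmodType R^c) :
  artinian R ->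
  (* S closed under direct sums (hence under isomorphism) *)
  (forall (I : Type) (Y : I -> lmodType R^c) (Z : lmodType R^c)
          (f : forall i, Y i -> Z),
      (forall i, S (Y i)) -> is_dsum f -> S Z) ->
  (* S closed under submodules *)
  (forall (U V : lmodType R^c) (f : U -> V),
      is_hom f -> injective f -> S V -> S U) ->
  (* R_R in S *)
  S (regular_rmod R) ->
  (* M_1, ..., M_n: the indecomposable f.g. objects of S up to isomorphism *)
  (forall i, [/\ S (Ms i), indecomposable (Ms i) & fin_gen (Ms i)]) ->
  (forall i j, isomorphic (Ms i) (Ms j) -> i = j) ->
  (forall Y : lmodType R^c, S Y -> indecomposable Y -> fin_gen Y ->
      exists i, isomorphic Y (Ms i)) ->
  (* M = M_1 (+) ... (+) M_n *)
  is_dsum iota ->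
  S X ->
  (* lambda : Hom_R(M,X) ⊗_E M -> X is a well-defined isomorphism of right R-modules *)
  [/\ (forall l l' : seq (HomR M X * M), teq l l' -> tensor_eval l = tensor_eval l'),
      (forall l l' : seq (HomR M X * M),
          tensor_eval (l ++ l') = tensor_eval l + tensor_eval l'),
      (forall (r : R^c) (l : seq (HomR M X * M)),
          tensor_eval (tscale r l) = r *: tensor_eval l),
      (forall x : X, exists l : seq (HomR M X * M), tensor_eval l = x)
    & (forall l l' : seq (HomR M X * M), tensor_eval l = tensor_eval l' -> teq l l')].
Proof.
move=> [art _] _ hsubc _ hMs _ hcls hd SX.
have AG := @all_good R S n Ms M iota X art hsubc hcls hd SX.
split.
- exact: eval_teq.
- by move=> l l'; rewrite /tensor_eval big_cat.
- move=> r l; rewrite /tensor_eval /tscale big_map scaler_sumr; apply: eq_bigr => pm _ /=.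
  exact: (proj2_sig pm.1).2.
- move=> x; have [E [_ hE]] := AG [:: x].
  exists [seq (pe.1, pe.2 x) | pe <- E]; rewrite /tensor_eval big_map /=.
  by symmetry; apply: hE; apply: span_mem; rewrite inE eqxx.
move=> l l' he.
pose gs (i : 'I_n) := cchoose (fun s : seq (Ms i) => forall u, span s u) [::].
have hgs : forall i u, span (gs i) u.
  move=> i; apply: (@cchooseP _ (fun s : seq (Ms i) => forall u, span s u)).
  by case: (hMs i).
pose gM := flatten [seq map (iota i) (gs i) | i <- index_enum 'I_n].
have hgM : forall m, span gM m.
  move=> m; case: hd => hi hex _; have [s ->] := hex m.
  apply: (sub_sum_in (span_sub gM)) => p _.
  apply: (span_min (span_sub gM) _ (span_hom (hi (tag p)) (hgs (tag p) (tagged p)))).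
  move=> x hx; apply: span_mem; apply/flattenP; exists (map (iota (tag p)) (gs (tag p))) => //.
  apply: (map_f (fun i => map (iota i) (gs i))); exact: mem_index_enum.
pose T := flatten [seq map (sval pm.1) gM | pm <- l ++ l'].
have hY : forall pm, List.In pm (l ++ l') -> forall m, span T (sval pm.1 m).
  move=> pm hin m.
  apply: (span_min (span_sub T) _ (span_hom (proj2_sig pm.1) (hgM m))).
  move=> x hx; apply: span_mem; apply/flattenP; exists (map (sval pm.1) gM) => //.
  exact: (in_map_mem (fun pm : HomR M X * M => map (sval pm.1) gM)).
have [E [hE1 hE2]] := AG T.
have H1 := L_exp (span_sub T) hE1 hE2 (fun pm h => hY pm (List.in_or_app _ _ _ (or_introl h))).
have H2 := L_exp (span_sub T) hE1 hE2 (fun pm h => hY pm (List.in_or_app _ _ _ (or_intror h))).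
rewrite he in H1; apply: teq_trans H1 _; exact: teq_sym.
Qed.
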